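(* Assume $\|\varphi\|_{C^2([a,b])}<1$. Then there is a constant $C_0>0$ depending only on $\|w\|_{C^2([a,b])}$ such that for all $(s,x)\in[0,1]\times\mathbb R$, $$|\partial_xg(s,x)-1|\le C_0\|\varphi\|_{C^2([a,b])},\qquad|\partial_xh(s,x)-w'(x)|\le C_0\|\varphi\|_{C^2([a,b])}.$$
   Context: Let $w\in C^3(\mathbb R)$ be periodic with $w>0$ on $[-1,1]$. Let $-1<a<b<1$ and let $\varphi:[a,b]\to\mathbb R$ be a polynomial with $\varphi^{(k)}(a)=\varphi^{(k)}(b)=0$ for $k=0,1,2,3$, extended by zero outside $[a,b]$. For $x\in\mathbb R$, $(\xi(t,x),\eta(t,x))$ is the unique global solution of $$\frac{d\xi}{dt}=-w'(\xi)\varphi(\xi)-(\eta-w(\xi))\varphi'(\xi),\quad\frac{d\eta}{dt}=\varphi(\xi),\quad \xi(0)=x,\ \eta(0)=w(x).$$ For $s\in[0,1]$, $t_0(s,x)\ge0$ denotes the first time $t\ge0$ with $\eta(t,x)=w(\xi(t,x))+s\varphi(\xi(t,x))$ (it exists). $g(s,x)=\xi(t_0(s,x),x)$ and $h(s,x)=\eta(t_0(s,x),x)=w(g(s,x))+s\varphi(g(s,x))$; both are $C^2$ functions on $[0,1]\times\mathbb R$. *)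

(* Defs.v *)
From Stdlib Require Import Reals List.
Open Scope R_scope.

(* Polynomials as coefficient lists [c0; c1; ...; cn] (lowest degree first). *)
Fixpoint peval (l : list R) (x : R) : R :=
  match l with
  | nil => 0
  | c :: l' => c + x * peval l' x
  end.

Fixpoint pderiv_aux (k : nat) (l : list R) : list R :=
  match l with
  | nil => nil
  | c :: l' => (INR k * c) :: pderiv_aux (S k) l'
  end.

Definition pderiv (l : list R) : list R :=
  match l with
  | nil => nil
  | _ :: l' => pderiv_aux 1 l'
  end.

Fixpoint pderivn (k : nat) (l : list R) : list R :=
  match k with
  | O => l
  | S k' => pderiv (pderivn k' l)
  end.

Definition ext0 (a b : R) (p : list R) (x : R) : R :=
  if Rle_dec a x then (if Rle_dec x b then peval p x else 0) else 0.

Definition sup_abs_on (f : R -> R) (a b S : R) : Prop :=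
  is_lub (fun y => exists x, a <= x <= b /\ y = Rabs (f x)) S.

(* N = ||f||_{C^2([a,b])} = sup|f| + sup|f'| + sup|f''| on [a,b],
   where f1, f2 are the first and second derivatives of f. *)
Definition C2norm_on (f f1 f2 : R -> R) (a b N : R) : Prop :=
  exists S0 S1 S2,
    sup_abs_on f a b S0 /\ sup_abs_on f1 a b S1 /\ sup_abs_on f2 a b S2 /\
    N = S0 + S1 + S2.

(* Main.v *)
Require Import Defs.
From Stdlib Require Import Reals List Lra Psatz Classical.
Open Scope R_scope.

Lemma dpl_eq f g x l l' : derivable_pt_lim f x l -> (forall y, f y = g y) -> l = l' ->
  derivable_pt_lim g x l'.
Proof.
  intros H Hfg <-. intros eps Heps. destruct (H eps Heps) as [d Hd].
  exists d. intros h Hh Hhd. rewrite <- !Hfg. auto.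
Qed.

Lemma dpl_loc f g x l d : 0 < d -> (forall y, Rabs (y - x) < d -> f y = g y) ->
  derivable_pt_lim g x l -> derivable_pt_lim f x l.
Proof.
  intros Hd Hfg H eps Heps. destruct (H eps Heps) as [d' Hd'].
  assert (Hm : 0 < Rmin d d').
  { apply Rmin_pos; [lra | apply (cond_pos d')]. }
  exists (mkposreal _ Hm). intros h Hh Hhd. simpl in Hhd.
  rewrite !Hfg.
  - apply Hd'; auto. apply Rlt_le_trans with (1 := Hhd). apply Rmin_r.
  - rewrite Rminus_diag, Rabs_R0; lra.
  - replace (x + h - x) with h by ring. apply Rlt_le_trans with (1 := Hhd). apply Rmin_l.
Qed.

Lemma mvt_abs f f' lo hi B :
  (forall c, lo <= c <= hi -> derivable_pt_lim f c (f' c)) ->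
  (forall c, lo <= c <= hi -> Rabs (f' c) <= B) ->
  forall u v, lo <= u <= hi -> lo <= v <= hi -> Rabs (f u - f v) <= B * Rabs (u - v).
Proof.
  intros Hd HB u v Hu Hv.
  destruct (Rtotal_order u v) as [Huv|[Huv|Huv]].
  - destruct (MVT_cor2 f f' u v Huv) as [c [Hc1 Hc2]].
    { intros c Hc. apply Hd. lra. }
    replace (f u - f v) with (- (f v - f u)) by ring. rewrite Rabs_Ropp, Hc1, Rabs_mult.
    rewrite (Rabs_minus_sym u v). apply Rmult_le_compat_r. apply Rabs_pos. apply HB. lra.
  - subst. rewrite !Rminus_diag, Rabs_R0. lra.
  - destruct (MVT_cor2 f f' v u Huv) as [c [Hc1 Hc2]].
    { intros c Hc. apply Hd. lra. }
    rewrite Hc1, Rabs_mult. apply Rmult_le_compat_r. apply Rabs_pos. apply HB. lra.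
Qed.

Lemma mvt_ex f f' u v : (forall c, derivable_pt_lim f c (f' c)) ->
  exists th, Rmin u v <= th <= Rmax u v /\ f u - f v = f' th * (u - v).
Proof.
  intros Hd. destruct (Rtotal_order u v) as [Huv|[Huv|Huv]].
  - destruct (MVT_cor2 f f' u v Huv) as [c [Hc1 Hc2]]. { intros; apply Hd. }
    exists c. split. rewrite Rmin_left, Rmax_right; lra. rewrite <- (Ropp_involutive (f u - f v)).
    replace (- (f u - f v)) with (f v - f u) by ring. rewrite Hc1. ring.
  - subst. exists v. split. rewrite Rmin_left, Rmax_left; lra. ring.
  - destruct (MVT_cor2 f f' v u Huv) as [c [Hc1 Hc2]]. { intros; apply Hd. }
    exists c. split. rewrite Rmin_right, Rmax_left; lra. exact Hc1.
Qed.

Lemma gronwall_up E E' c T : 0 <= c ->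
  (forall t, 0 <= t <= T -> derivable_pt_lim E t (E' t)) ->
  (forall t, 0 <= t <= T -> E' t <= c * E t) ->
  forall t, 0 <= t <= T -> E t <= E 0 * exp (c * t).
Proof.
  intros Hc Hd HE t Ht.
  set (f := fun t => E t * exp (- c * t)).
  set (f' := fun t => E' t * exp (- c * t) + E t * (- c * exp (- c * t))).
  assert (Hf : forall u, 0 <= u <= t -> derivable_pt_lim f u (f' u)).
  { intros u Hu. unfold f, f'. apply derivable_pt_lim_mult with (f1 := E)
      (f2 := fun u => exp (- c * u)) (x := u). apply Hd; lra.
    apply dpl_eq with (f := comp exp (fun u => - c * u)) (l := exp (- c * u) * (- c)).
    apply derivable_pt_lim_comp. apply dpl_eq with (f := mult_real_fct (-c) id) (l := -c * 1).
    apply derivable_pt_lim_scal, derivable_pt_lim_id. reflexivity. ring.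
    apply derivable_pt_lim_exp. reflexivity. ring. }
  assert (Hle : f t <= f 0).
  { destruct (Req_dec t 0) as [->|Ht0]. lra.
    destruct (MVT_cor2 f f' 0 t) as [th [H1 H2]]. lra. intros; apply Hf; lra.
    assert (f' th <= 0).
    { unfold f'. assert (E' th <= c * E th) by (apply HE; lra).
      pose proof (exp_pos (- c * th)). nra. }
    nra. }
  unfold f in Hle. rewrite Rmult_0_r, exp_0, Rmult_1_r in Hle.
  assert (Hx : E t = E t * exp (- c * t) * exp (c * t)).
  { rewrite Rmult_assoc, <- exp_plus. replace (- c * t + c * t) with 0 by ring.
    rewrite exp_0; ring. }
  rewrite Hx. apply Rmult_le_compat_r. left; apply exp_pos. exact Hle.
Qed.

Lemma gronwall_down E E' c T : 0 <= c ->
  (forall t, 0 <= t <= T -> derivable_pt_lim E t (E' t)) ->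
  (forall t, 0 <= t <= T -> - c * E t <= E' t) ->
  forall t, 0 <= t <= T -> E 0 * exp (- c * t) <= E t.
Proof.
  intros Hc Hd HE t Ht.
  set (f := fun t => E t * exp (c * t)).
  set (f' := fun t => E' t * exp (c * t) + E t * (c * exp (c * t))).
  assert (Hf : forall u, 0 <= u <= t -> derivable_pt_lim f u (f' u)).
  { intros u Hu. unfold f, f'. apply derivable_pt_lim_mult with (f1 := E)
      (f2 := fun u => exp (c * u)) (x := u). apply Hd; lra.
    apply dpl_eq with (f := comp exp (fun u => c * u)) (l := exp (c * u) * c).
    apply derivable_pt_lim_comp. apply dpl_eq with (f := mult_real_fct c id) (l := c * 1).
    apply derivable_pt_lim_scal, derivable_pt_lim_id. reflexivity. ring.
    apply derivable_pt_lim_exp. reflexivity. ring. }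
  assert (Hle : f 0 <= f t).
  { destruct (Req_dec t 0) as [->|Ht0]. lra.
    destruct (MVT_cor2 f f' 0 t) as [th [H1 H2]]. lra. intros; apply Hf; lra.
    assert (0 <= f' th).
    { unfold f'. assert (- c * E th <= E' th) by (apply HE; lra).
      pose proof (exp_pos (c * th)). nra. }
    nra. }
  unfold f in Hle. rewrite Rmult_0_r, exp_0, Rmult_1_r in Hle.
  assert (Hx : E t = E t * exp (c * t) * exp (- c * t)).
  { rewrite Rmult_assoc, <- exp_plus. replace (c * t + - c * t) with 0 by ring.
    rewrite exp_0; ring. }
  rewrite Hx. apply Rmult_le_compat_r. left; apply exp_pos. exact Hle.
Qed.

Lemma left_cont f T m : continuity_pt f T -> 0 < T ->
  (forall t, 0 <= t < T -> f t <= m) -> f T <= m.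
Proof.
  intros Hc HT H. destruct (Rle_dec (f T) m) as [|Hn]; auto. exfalso.
  apply Rnot_le_lt in Hn.
  destruct (Hc (f T - m)) as [d [Hd Hd']]. lra.
  set (t := T - Rmin d T / 2).
  assert (Hm : 0 < Rmin d T) by (apply Rmin_pos; lra).
  assert (Ht1 : Rmin d T <= T) by apply Rmin_r.
  assert (Ht2 : Rmin d T <= d) by apply Rmin_l.
  assert (f t <= m) by (apply H; unfold t; lra).
  assert (Rabs (f t - f T) < f T - m).
  { apply (Hd' t). split. unfold D_x, no_cond; split; auto. unfold t; lra.
    simpl. unfold R_dist, t. rewrite Rabs_left; lra. }
  rewrite Rabs_left1 in H1; lra.
Qed.

Lemma lim_bound f x d A B : derivable_pt_lim f x d ->
  (forall eps, 0 < eps -> exists del, 0 < del /\ forall h, h <> 0 -> Rabs h < del ->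
     Rabs ((f (x + h) - f x) / h - A) <= B + eps) ->
  Rabs (d - A) <= B.
Proof.
  intros Hd H. destruct (Rle_dec (Rabs (d - A)) B) as [|Hn]; auto. exfalso.
  apply Rnot_le_lt in Hn. set (e := (Rabs (d - A) - B) / 2).
  assert (He : 0 < e) by (unfold e; lra).
  destruct (Hd e He) as [d1 Hd1]. destruct (H e He) as [d2 [Hd2 H2]].
  set (h := Rmin d1 d2 / 2).
  assert (Hm : 0 < Rmin d1 d2) by (apply Rmin_pos; [apply cond_pos|lra]).
  assert (h1 : Rmin d1 d2 <= d1) by apply Rmin_l.
  assert (h2 : Rmin d1 d2 <= d2) by apply Rmin_r.
  assert (Hh : h <> 0) by (unfold h; lra).
  assert (Hha : Rabs h = h) by (apply Rabs_right; unfold h; lra).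
  specialize (Hd1 h Hh). specialize (H2 h Hh).
  rewrite Hha in Hd1, H2.
  assert (A1 : Rabs ((f (x + h) - f x) / h - d) < e) by (apply Hd1; unfold h; lra).
  assert (A2 : Rabs ((f (x + h) - f x) / h - A) <= B + e) by (apply H2; unfold h; lra).
  assert (Rabs (d - A) <= Rabs ((f (x + h) - f x) / h - d) + Rabs ((f (x + h) - f x) / h - A)).
  { replace (d - A) with (- ((f (x + h) - f x) / h - d) + ((f (x + h) - f x) / h - A)) by ring.
    rewrite <- (Rabs_Ropp ((f (x + h) - f x) / h - d)). apply Rabs_triang. }
  unfold e in *. lra.
Qed.

Lemma sq_le p q : 0 <= q -> p * p <= q * q -> Rabs p <= q.
Proof.
  intros Hq H. destruct (Rle_dec (Rabs p) q) as [|Hn]; auto.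
  apply Rnot_le_lt in Hn. exfalso. assert (Rabs p * Rabs p > q * q) by nra.
  rewrite <- Rabs_mult, Rabs_right in H0 by nra. lra.
Qed.

Lemma peval_pderiv_aux l : forall k x,
  peval (pderiv_aux (S k) l) x = peval l x + peval (pderiv_aux k l) x.
Proof.
  induction l as [|c l IH]; intros k x; simpl. ring.
  rewrite IH. destruct k; simpl; ring.
Qed.

Lemma peval_deriv l x : derivable_pt_lim (peval l) x (peval (pderiv l) x).
Proof.
  induction l as [|c l IH].
  - simpl. apply dpl_eq with (f := fct_cte 0) (l := 0). apply derivable_pt_lim_const.
    reflexivity. reflexivity.
  - apply dpl_eq with (f := (fct_cte c + id * peval l)%F) (l := 0 + (1 * peval l x + id x * peval (pderiv l) x)).
    apply derivable_pt_lim_plus. apply derivable_pt_lim_const.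
    apply derivable_pt_lim_mult. apply derivable_pt_lim_id. exact IH.
    intro y. reflexivity.
    simpl. rewrite peval_pderiv_aux. unfold id.
    destruct l as [|c' l']; simpl. ring. ring.
Qed.

Lemma ext0_in a b l u : a <= u <= b -> ext0 a b l u = peval l u.
Proof. intros [H1 H2]. unfold ext0. destruct (Rle_dec a u); [|lra]. destruct (Rle_dec u b); lra. Qed.

Lemma ext0_out a b l u : ~ (a <= u <= b) -> ext0 a b l u = 0.
Proof. intros H. unfold ext0. destruct (Rle_dec a u); [|lra]. destruct (Rle_dec u b); [|lra]. exfalso; lra. Qed.

Section Flow.
Variables (w w1 w2 : R -> R) (a b : R) (p : list R) (xi eta t0 : R -> R -> R) (M N s : R).
Hypothesis Hw1 : forall x, derivable_pt_lim w x (w1 x).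
Hypothesis Hw2 : forall x, derivable_pt_lim w1 x (w2 x).
Hypothesis Hab : a < b.
Hypothesis Hpa : peval p a = 0.
Hypothesis Hpb : peval p b = 0.
Hypothesis Hxi0 : forall x, xi 0 x = x.
Hypothesis Heta0 : forall x, eta 0 x = w x.
Hypothesis Hxi' : forall x t, derivable_pt_lim (fun t' => xi t' x) t
        (- w1 (xi t x) * ext0 a b p (xi t x)
         - (eta t x - w (xi t x)) * ext0 a b (pderiv p) (xi t x)).
Hypothesis Heta' : forall x t, derivable_pt_lim (fun t' => eta t' x) t
        (ext0 a b p (xi t x)).
Hypothesis Hs : 0 <= s <= 1.
Hypothesis Ht0 : forall x,
       0 <= t0 s x /\
       eta (t0 s x) x = w (xi (t0 s x) x) + s * ext0 a b p (xi (t0 s x) x) /\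
       (forall t, 0 <= t < t0 s x ->
          eta t x <> w (xi t x) + s * ext0 a b p (xi t x)).
Hypothesis HM : 0 <= M.
Hypothesis HN : 0 <= N.
Hypothesis HN1 : N < 1.
Hypothesis Bw1 : forall u, a <= u <= b -> Rabs (w1 u) <= M.
Hypothesis Bw2 : forall u, a <= u <= b -> Rabs (w2 u) <= M.
Hypothesis BP0 : forall u, a <= u <= b -> Rabs (peval p u) <= N.
Hypothesis BP1 : forall u, a <= u <= b -> Rabs (peval (pderiv p) u) <= N.
Hypothesis BP2 : forall u, a <= u <= b -> Rabs (peval (pderiv (pderiv p)) u) <= N.

Local Notation Phi := (ext0 a b p).
Local Notation P := (peval p).
Local Notation P1 := (peval (pderiv p)).
Local Notation P2 := (peval (pderiv (pderiv p))).

Definition kk u sg := w1 u + sg * P1 u.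
Definition AA u sg := - P u * kk u sg.
Definition BB u sg := 1 + kk u sg * kk u sg.
Definition zz y t := eta t y - w (xi t y).
Definition sig y t := zz y t / Phi (xi t y).
Definition xd y t := - w1 (xi t y) * Phi (xi t y) - (eta t y - w (xi t y)) * ext0 a b (pderiv p) (xi t y).
Definition GG y := xi (t0 s y) y.

Lemma nz_in u : Phi u <> 0 -> a < u < b.
Proof.
  intros H. destruct (Rle_dec a u) as [H1|H1].
  2: { rewrite ext0_out in H; [lra|]. lra. }
  destruct (Rle_dec u b) as [H2|H2].
  2: { rewrite ext0_out in H; [lra|]. lra. }
  rewrite ext0_in in H by lra.
  destruct (Req_dec u a) as [->|]; [lra|]. destruct (Req_dec u b) as [->|]; [lra|]. lra.
Qed.

Lemma P_lip u v : a <= u <= b -> a <= v <= b -> Rabs (P u - P v) <= N * Rabs (u - v).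
Proof.
  apply mvt_abs with (f' := P1) (lo := a) (hi := b).
  intros; apply peval_deriv. exact BP1.
Qed.

Lemma lipz c u : Phi c = 0 -> Rabs (Phi u) <= N * Rabs (u - c).
Proof.
  intros Hc. destruct (classic (a <= u <= b)) as [Hu|Hu].
  2: { rewrite ext0_out by auto. rewrite Rabs_R0. apply Rmult_le_pos; auto; apply Rabs_pos. }
  rewrite ext0_in by auto.
  destruct (classic (a <= c <= b)) as [Hc'|Hc'].
  - rewrite ext0_in in Hc by auto. rewrite <- (Rminus_0_r (P u)), <- Hc. apply P_lip; auto.
  - destruct (Rle_dec a c).
    + rewrite <- (Rminus_0_r (P u)), <- Hpb.
      apply Rle_trans with (N * Rabs (u - b)). apply P_lip; lra.
      apply Rmult_le_compat_l; auto. rewrite !Rabs_left1; lra.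
    + rewrite <- (Rminus_0_r (P u)), <- Hpa.
      apply Rle_trans with (N * Rabs (u - a)). apply P_lip; lra.
      apply Rmult_le_compat_l; auto. rewrite !Rabs_right; lra.
Qed.

Lemma Phi_lip u v : Rabs (Phi u - Phi v) <= N * Rabs (u - v).
Proof.
  destruct (Req_dec (Phi v) 0) as [Hv|Hv].
  { rewrite Hv, Rminus_0_r. apply lipz; auto. }
  destruct (Req_dec (Phi u) 0) as [Hu|Hu].
  { rewrite Hu, Rminus_0_l, Rabs_Ropp, Rabs_minus_sym. apply lipz; auto. }
  apply nz_in in Hu. apply nz_in in Hv. rewrite !ext0_in by lra. apply P_lip; lra.
Qed.

Lemma D_Phi u : a < u < b -> derivable_pt_lim Phi u (P1 u).
Proof.
  intros Hu. apply dpl_loc with (g := P) (d := Rmin (u - a) (b - u)).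
  apply Rmin_pos; lra.
  intros y Hy. apply ext0_in.
  assert (Rmin (u - a) (b - u) <= u - a) by apply Rmin_l.
  assert (Rmin (u - a) (b - u) <= b - u) by apply Rmin_r.
  apply Rabs_def2 in Hy. lra.
  apply peval_deriv.
Qed.

Lemma xi_cont y t : continuity_pt (fun t => xi t y) t.
Proof. apply derivable_continuous_pt. eexists. apply Hxi'. Qed.

Lemma D_PhiXi y t : a < xi t y < b ->
  derivable_pt_lim (fun t => Phi (xi t y)) t (P1 (xi t y) * xd y t).
Proof.
  intros H. apply dpl_eq with (f := comp Phi (fun t => xi t y)) (l := P1 (xi t y) * xd y t).
  apply derivable_pt_lim_comp. apply Hxi'. apply D_Phi; auto. reflexivity. reflexivity.
Qed.

Lemma D_zz y t : derivable_pt_lim (zz y) t (Phi (xi t y) - w1 (xi t y) * xd y t).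
Proof.
  apply dpl_eq with (f := ((fun t => eta t y) - comp w (fun t => xi t y))%F)
    (l := Phi (xi t y) - w1 (xi t y) * xd y t).
  apply derivable_pt_lim_minus. apply Heta'.
  apply dpl_eq with (f := comp w (fun t => xi t y)) (l := w1 (xi t y) * xd y t).
  apply derivable_pt_lim_comp. apply Hxi'. apply Hw1. reflexivity. reflexivity.
  reflexivity. reflexivity.
Qed.

Lemma zz_cont y t : continuity_pt (zz y) t.
Proof. apply derivable_continuous_pt. eexists. apply D_zz. Qed.

Lemma xd_eq y t : Phi (xi t y) <> 0 -> xd y t = AA (xi t y) (sig y t).
Proof.
  intros H. pose proof (nz_in _ H) as Hi.
  unfold xd, AA, kk, sig, zz. rewrite ext0_in by lra. rewrite ext0_in by lra.
  rewrite ext0_in in H by lra. field. auto.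
Qed.

Lemma D_xi y t : Phi (xi t y) <> 0 ->
  derivable_pt_lim (fun t => xi t y) t (AA (xi t y) (sig y t)).
Proof. intros H. rewrite <- (xd_eq y t H). exact (Hxi' y t). Qed.

Lemma D_sig y t : Phi (xi t y) <> 0 ->
  derivable_pt_lim (sig y) t (BB (xi t y) (sig y t)).
Proof.
  intros H. pose proof (nz_in _ H) as Hi.
  apply dpl_eq with (f := (zz y / (fun t => Phi (xi t y)))%F)
    (l := ((Phi (xi t y) - w1 (xi t y) * xd y t) * Phi (xi t y)
           - (P1 (xi t y) * xd y t) * zz y t) / (Phi (xi t y))²).
  apply (derivable_pt_lim_div (zz y) (fun t => Phi (xi t y)) t). apply D_zz. apply D_PhiXi; auto. auto.
  reflexivity.
  unfold xd, BB, kk, sig, zz, Rsqr. rewrite ext0_in by lra. rewrite ext0_in by lra.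
  rewrite ext0_in in H by lra. field. auto.
Qed.

Lemma sig0 y : Phi y <> 0 -> sig y 0 = 0.
Proof. intros H. unfold sig, zz. rewrite Hxi0, Heta0. unfold Rdiv. ring. Qed.

Lemma G_triv y : (s = 0 \/ Phi y = 0) -> t0 s y = 0.
Proof.
  intros H. destruct (Ht0 y) as [H1 [_ H3]].
  destruct (Req_dec (t0 s y) 0) as [|Hn]; auto. exfalso.
  apply (H3 0). lra. rewrite Hxi0, Heta0. destruct H as [->| ->]; ring.
Qed.

Lemma G_triv' y : (s = 0 \/ Phi y = 0) -> GG y = y.
Proof. intros H. unfold GG. rewrite G_triv by auto. apply Hxi0. Qed.


Lemma amul x y A B : Rabs x <= A -> Rabs y <= B -> Rabs (x * y) <= A * B.
Proof.
  intros H1 H2. rewrite Rabs_mult. apply Rmult_le_compat; auto; apply Rabs_pos.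
Qed.

Lemma kk_bd u sg : a <= u <= b -> 0 <= sg <= 1 -> Rabs (kk u sg) <= M + 1.
Proof.
  intros Hu Hsg. unfold kk. eapply Rle_trans. apply Rabs_triang.
  assert (Rabs (sg * P1 u) <= 1 * 1). apply amul. rewrite Rabs_right; lra.
  pose proof (BP1 u Hu); lra.
  pose proof (Bw1 u Hu). lra.
Qed.

Lemma AA_bd u sg : a <= u <= b -> 0 <= sg <= 1 -> Rabs (AA u sg) <= (M + 1) * Rabs (P u).
Proof.
  intros Hu Hsg. unfold AA. rewrite Rabs_mult, Rabs_Ropp.
  rewrite Rmult_comm. apply Rmult_le_compat_r. apply Rabs_pos. apply kk_bd; auto.
Qed.

Lemma AA_bd2 u sg : a <= u <= b -> 0 <= sg <= 1 -> Rabs (AA u sg) <= (M + 1) * N.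
Proof.
  intros Hu Hsg. eapply Rle_trans. apply AA_bd; auto. apply Rmult_le_compat_l. lra. auto.
Qed.

Lemma BB_ge1 u sg : 1 <= BB u sg.
Proof. unfold BB. pose proof (Rle_0_sqr (kk u sg)). unfold Rsqr in H. lra. Qed.

Lemma D_AA sg u : derivable_pt_lim (fun u => AA u sg) u
   (- (P1 u * kk u sg + P u * (w2 u + sg * P2 u))).
Proof.
  eapply dpl_eq with (f := (mult_real_fct (-1) P * (w1 + mult_real_fct sg P1))%F).
  apply derivable_pt_lim_mult. apply derivable_pt_lim_scal. apply peval_deriv.
  apply derivable_pt_lim_plus. apply Hw2. apply derivable_pt_lim_scal. apply peval_deriv.
  intros y. unfold AA, kk, mult_real_fct, mult_fct, plus_fct. ring.
  unfold kk, mult_real_fct, mult_fct, plus_fct. ring.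
Qed.

Lemma D_BB sg u : derivable_pt_lim (fun u => BB u sg) u
   (2 * kk u sg * (w2 u + sg * P2 u)).
Proof.
  eapply dpl_eq with (f := (fct_cte 1 + (w1 + mult_real_fct sg P1) * (w1 + mult_real_fct sg P1))%F).
  apply derivable_pt_lim_plus. apply derivable_pt_lim_const.
  apply derivable_pt_lim_mult;
  (apply derivable_pt_lim_plus; [apply Hw2 | apply derivable_pt_lim_scal; apply peval_deriv]).
  intros y. unfold BB, kk, mult_real_fct, mult_fct, plus_fct, fct_cte. ring.
  unfold kk, mult_real_fct, mult_fct, plus_fct, fct_cte. ring.
Qed.

Lemma AA_lip u1 u2 sg1 sg2 : a <= u1 <= b -> a <= u2 <= b -> 0 <= sg1 <= 1 -> 0 <= sg2 <= 1 ->
  Rabs (AA u1 sg1 - AA u2 sg2) <= 3 * (M + 1) * N * (Rabs (u1 - u2) + Rabs (sg1 - sg2)).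
Proof.
  intros Hu1 Hu2 Hs1 Hs2.
  assert (H1 : Rabs (AA u1 sg1 - AA u2 sg1) <= (2 * (M + 1) * N) * Rabs (u1 - u2)).
  { apply mvt_abs with (f := fun u => AA u sg1) (lo := a) (hi := b)
      (f' := fun u => - (P1 u * kk u sg1 + P u * (w2 u + sg1 * P2 u))); auto.
    intros; apply D_AA.
    intros c Hc. rewrite Rabs_Ropp. eapply Rle_trans. apply Rabs_triang.
    assert (Rabs (P1 c * kk c sg1) <= N * (M + 1)) by (apply amul; auto using kk_bd).
    assert (Rabs (w2 c + sg1 * P2 c) <= M + 1).
    { eapply Rle_trans. apply Rabs_triang.
      assert (Rabs (sg1 * P2 c) <= 1 * 1). apply amul. rewrite Rabs_right; lra.
      pose proof (BP2 c Hc); lra. pose proof (Bw2 c Hc). lra. }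
    assert (Rabs (P c * (w2 c + sg1 * P2 c)) <= N * (M + 1)) by (apply amul; auto).
    lra. }
  assert (H2 : Rabs (AA u2 sg1 - AA u2 sg2) <= N * Rabs (sg1 - sg2)).
  { replace (AA u2 sg1 - AA u2 sg2) with ((- P u2 * P1 u2) * (sg1 - sg2)) by (unfold AA, kk; ring).
    rewrite Rabs_mult. apply Rmult_le_compat_r. apply Rabs_pos.
    rewrite Rabs_mult, Rabs_Ropp. pose proof (BP0 u2 Hu2). pose proof (BP1 u2 Hu2).
    pose proof (Rabs_pos (P u2)). pose proof (Rabs_pos (P1 u2)). nra. }
  replace (AA u1 sg1 - AA u2 sg2) with ((AA u1 sg1 - AA u2 sg1) + (AA u2 sg1 - AA u2 sg2)) by ring.
  eapply Rle_trans. apply Rabs_triang.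
  pose proof (Rabs_pos (u1 - u2)). pose proof (Rabs_pos (sg1 - sg2)).
  assert (0 <= M * N * Rabs (u1 - u2)) by (apply Rmult_le_pos; [apply Rmult_le_pos|]; lra).
  assert (0 <= M * N * Rabs (sg1 - sg2)) by (apply Rmult_le_pos; [apply Rmult_le_pos|]; lra).
  assert (0 <= N * Rabs (u1 - u2)) by (apply Rmult_le_pos; lra).
  assert (0 <= N * Rabs (sg1 - sg2)) by (apply Rmult_le_pos; lra).
  lra.
Qed.

Lemma BB_lip u1 u2 sg1 sg2 : a <= u1 <= b -> a <= u2 <= b -> 0 <= sg1 <= 1 -> 0 <= sg2 <= 1 ->
  Rabs (BB u1 sg1 - BB u2 sg2) <= 4 * (M + 1) * (M + 1) * (Rabs (u1 - u2) + Rabs (sg1 - sg2)).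
Proof.
  intros Hu1 Hu2 Hs1 Hs2.
  assert (H1 : Rabs (BB u1 sg1 - BB u2 sg1) <= (2 * (M + 1) * (M + 1)) * Rabs (u1 - u2)).
  { apply mvt_abs with (f := fun u => BB u sg1) (lo := a) (hi := b)
      (f' := fun u => 2 * kk u sg1 * (w2 u + sg1 * P2 u)); auto.
    intros; apply D_BB.
    intros c Hc. rewrite Rmult_assoc. rewrite Rmult_assoc.
    apply amul. rewrite Rabs_right; lra.
    apply amul. apply kk_bd; auto.
    eapply Rle_trans. apply Rabs_triang.
    assert (Rabs (sg1 * P2 c) <= 1 * 1). apply amul. rewrite Rabs_right; lra.
    pose proof (BP2 c Hc); lra. pose proof (Bw2 c Hc). lra. }
  assert (H2 : Rabs (BB u2 sg1 - BB u2 sg2) <= 2 * (M + 1) * Rabs (sg1 - sg2)).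
  { replace (BB u2 sg1 - BB u2 sg2) with ((P1 u2 * (kk u2 sg1 + kk u2 sg2)) * (sg1 - sg2)) by (unfold BB, kk; ring).
    rewrite Rabs_mult. apply Rmult_le_compat_r. apply Rabs_pos.
    replace (2 * (M + 1)) with (1 * (2 * (M + 1))) by ring. apply amul.
    pose proof (BP1 u2 Hu2). lra.
    eapply Rle_trans. apply Rabs_triang. pose proof (kk_bd u2 sg1 Hu2 Hs1).
    pose proof (kk_bd u2 sg2 Hu2 Hs2). lra. }
  replace (BB u1 sg1 - BB u2 sg2) with ((BB u1 sg1 - BB u2 sg1) + (BB u2 sg1 - BB u2 sg2)) by ring.
  eapply Rle_trans. apply Rabs_triang.
  pose proof (Rabs_pos (u1 - u2)). pose proof (Rabs_pos (sg1 - sg2)).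
  assert (0 <= M * M * Rabs (sg1 - sg2)) by (apply Rmult_le_pos; [apply Rmult_le_pos|]; lra).
  assert (0 <= M * M * Rabs (u1 - u2)) by (apply Rmult_le_pos; [apply Rmult_le_pos|]; lra).
  assert (0 <= M * Rabs (sg1 - sg2)) by (apply Rmult_le_pos; lra).
  assert (0 <= M * Rabs (u1 - u2)) by (apply Rmult_le_pos; lra).
  lra.
Qed.


Lemma cont_of f t l : derivable_pt_lim f t l -> continuity_pt f t.
Proof. intros H. apply derivable_continuous_pt. exists l. exact H. Qed.

Lemma dsq f t l : derivable_pt_lim f t l -> derivable_pt_lim (fun t => f t * f t) t (2 * f t * l).
Proof.
  intros H. eapply dpl_eq with (f := (f * f)%F). apply derivable_pt_lim_mult; eauto.
  reflexivity. unfold mult_fct. ring.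
Qed.

Lemma exp_mono x y : x <= y -> exp x <= exp y.
Proof. intros [H|H]. left; apply exp_increasing; auto. subst; lra. Qed.

Lemma sig_claim y t1 : 0 < s -> Phi y <> 0 -> t1 <= t0 s y ->
  (forall u, 0 <= u < t1 -> Phi (xi u y) <> 0) ->
  forall u, 0 <= u < t1 -> u <= sig y u < s.
Proof.
  intros Hs0 Hy Ht1 Hnz u Hu.
  assert (Hd : forall c, 0 <= c <= u -> derivable_pt_lim (sig y) c (BB (xi c y) (sig y c))).
  { intros; apply D_sig; apply Hnz; lra. }
  assert (Hge : u <= sig y u).
  { destruct (Req_dec u 0) as [->|Hu0]. rewrite sig0; lra.
    destruct (MVT_cor2 (sig y) (fun c => BB (xi c y) (sig y c)) 0 u) as [c [H1 H2]]. lra.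
    intros; apply Hd; lra.
    rewrite sig0 in H1 by auto. pose proof (BB_ge1 (xi c y) (sig y c)). nra. }
  split; auto.
  destruct (Rlt_dec (sig y u) s) as [|Hn]; auto. exfalso.
  assert (Hex : exists tau, 0 <= tau <= u /\ sig y tau = s).
  { destruct (Req_dec (sig y u) s). exists u; split; auto; lra.
    assert (Hup : 0 < u).
    { destruct (Req_dec u 0) as [Heq|]; [|lra]. rewrite Heq, sig0 in Hn; auto; lra. }
    destruct (Ranalysis5.IVT_interv (fun t => sig y t - s) 0 u) as [tau [Ht Hf]].
    - intros c Hc. apply cont_of with (l := BB (xi c y) (sig y c) - 0).
      eapply dpl_eq with (f := (sig y - fct_cte s)%F). apply derivable_pt_lim_minus.
      apply Hd; lra. apply derivable_pt_lim_const. reflexivity. reflexivity.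
    - lra.
    - rewrite sig0; lra.
    - lra.
    - exists tau; split; auto; lra. }
  destruct Hex as [tau [Htau Hsig]].
  destruct (Ht0 y) as [_ [_ H3]]. apply (H3 tau). lra.
  assert (Hp : Phi (xi tau y) <> 0) by (apply Hnz; lra).
  assert (eta tau y - w (xi tau y) = s * Phi (xi tau y)).
  { rewrite <- Hsig. unfold sig, zz. field. auto. }
  lra.
Qed.

Lemma nz_before y : 0 < s -> Phi y <> 0 -> forall u, 0 <= u < t0 s y -> Phi (xi u y) <> 0.
Proof.
  intros Hs0 Hy. set (T := t0 s y).
  intros u0 Hu0. destruct (Req_dec (Phi (xi u0 y)) 0) as [Hzu0|]; auto. exfalso.
  set (L := fun t => forall z, 0 <= z < T -> Phi (xi z y) = 0 -> t <= z).
  assert (HL0 : L 0) by (intros z Hz _; lra).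
  assert (HLb : bound L) by (exists u0; intros t Ht; apply Ht; auto).
  destruct (completeness L HLb (ex_intro _ 0 HL0)) as [t1 [Hub Hlub]].
  assert (Hlow : forall z, 0 <= z < T -> Phi (xi z y) = 0 -> t1 <= z).
  { intros z Hz Hz0. apply Hlub. intros t Ht. apply Ht; auto. }
  assert (Ht1a : 0 <= t1) by (apply Hub; auto).
  assert (Ht1b : t1 <= u0) by (apply Hlow; auto).
  assert (Hbefore : forall u, 0 <= u < t1 -> Phi (xi u y) <> 0).
  { intros u Hu Hz'. pose proof (Hlow u ltac:(lra) Hz'). lra. }
  assert (Hat : Phi (xi t1 y) = 0).
  { destruct (Req_dec (Phi (xi t1 y)) 0) as [|Hn]; auto. exfalso.
    pose proof (nz_in _ Hn) as Hi.
    assert (Hc : continuity_pt (fun t => Phi (xi t y)) t1)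
      by (eapply cont_of; apply D_PhiXi; auto).
    destruct (Hc (Rabs (Phi (xi t1 y)))) as [d [Hd Hd']]. apply Rabs_pos_lt; auto.
    assert (HL : L (t1 + d / 2)).
    { intros z Hz Hz0. pose proof (Hlow z Hz Hz0).
      destruct (Rlt_dec z (t1 + d)) as [Hlt|]; [|lra]. exfalso.
      destruct (Req_dec z t1) as [->|Hne]. apply Hn; auto.
      assert (Rabs (Phi (xi z y) - Phi (xi t1 y)) < Rabs (Phi (xi t1 y))).
      { apply Hd'. split. unfold D_x, no_cond. split; auto.
        simpl; unfold R_dist; rewrite Rabs_right; lra. }
      rewrite Hz0, Rminus_0_l, Rabs_Ropp in H0. lra. }
    pose proof (Hub _ HL). lra. }
  assert (Ht1pos : 0 < t1).
  { destruct (Req_dec t1 0) as [Heq|]; [|lra]. rewrite Heq, Hxi0 in Hat. contradiction. }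
  pose proof (sig_claim y t1 Hs0 Hy ltac:(unfold T in *; lra) Hbefore) as Hsc.
  set (g := xi t1 y).
  set (F := fun u => zz y u * zz y u - N * N * ((xi u y - g) * (xi u y - g))).
  assert (Hzb : forall u, 0 <= u < t1 -> F u <= 0).
  { intros u Hu. destruct (Hsc u Hu).
    assert (He : zz y u = sig y u * Phi (xi u y)) by (unfold sig; field; apply Hbefore; auto).
    pose proof (lipz g (xi u y) Hat) as Hl.
    assert (Habs : Rabs (zz y u) <= N * Rabs (xi u y - g)).
    { rewrite He, Rabs_mult. rewrite (Rabs_right (sig y u)) by lra.
      pose proof (Rabs_pos (Phi (xi u y))). nra. }
    unfold F. assert (0 <= Rabs (zz y u)) by apply Rabs_pos.
    assert (Rabs (zz y u) * Rabs (zz y u) <= (N * Rabs (xi u y - g)) * (N * Rabs (xi u y - g))) by nra.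
    assert (E1 : zz y u * zz y u = Rabs (zz y u) * Rabs (zz y u))
      by (rewrite <- Rabs_mult; rewrite Rabs_right; [reflexivity| apply Rle_ge; apply Rle_0_sqr]).
    assert (E2 : (xi u y - g) * (xi u y - g) = Rabs (xi u y - g) * Rabs (xi u y - g))
      by (rewrite <- Rabs_mult; rewrite Rabs_right; [reflexivity| apply Rle_ge; apply Rle_0_sqr]).
    rewrite E1, E2.
    replace (N * N * (Rabs (xi u y - g) * Rabs (xi u y - g))) with
      ((N * Rabs (xi u y - g)) * (N * Rabs (xi u y - g))) by ring. lra. }
  assert (Hc : continuity_pt F t1).
  { eapply cont_of. eapply dpl_eq with (f := minus_fct (fun u => zz y u * zz y u)
        (mult_real_fct (N * N) (fun u => (xi u y - g) * (xi u y - g)))).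
    apply derivable_pt_lim_minus. apply dsq. apply D_zz.
    apply derivable_pt_lim_scal. apply dsq with (f := fun u => xi u y - g).
    eapply dpl_eq with (f := ((fun u => xi u y) - fct_cte g)%F).
    apply derivable_pt_lim_minus. apply Hxi'. apply derivable_pt_lim_const.
    reflexivity. reflexivity. reflexivity. reflexivity. }
  pose proof (left_cont F t1 0 Hc Ht1pos Hzb) as HF.
  unfold F, g in HF. rewrite Rminus_diag in HF.
  assert (Hz1 : zz y t1 = 0) by nra.
  destruct (Ht0 y) as [_ [_ H3]]. apply (H3 t1). unfold T in *; lra.
  unfold zz in Hz1. rewrite Hat. lra.
Qed.


Lemma T_pos y : 0 < s -> Phi y <> 0 -> 0 < t0 s y.
Proof.
  intros Hs0 Hy. destruct (Ht0 y) as [H1 [H2 _]].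
  destruct (Req_dec (t0 s y) 0) as [Heq|]; [|lra]. exfalso.
  rewrite Heq, Hxi0, Heta0 in H2. assert (s * Phi y = 0) by lra.
  apply Rmult_integral in H. destruct H; lra.
Qed.

Lemma T_le y : 0 < s -> Phi y <> 0 -> t0 s y <= s.
Proof.
  intros Hs0 Hy. destruct (Rle_dec (t0 s y) s) as [|Hn]; auto. exfalso.
  pose proof (sig_claim y (t0 s y) Hs0 Hy (Rle_refl _) (nz_before y Hs0 Hy) s) as H.
  assert (0 <= s < t0 s y) by lra. apply H in H0. lra.
Qed.

Lemma abs_lo x B : Rabs x <= B -> - B <= x.
Proof. intros H. pose proof (Rle_abs (- x)). rewrite Rabs_Ropp in H0. lra. Qed.

Lemma abs_hi x B : Rabs x <= B -> x <= B.
Proof. intros H. pose proof (Rle_abs x). lra. Qed.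

Lemma sq_abs x : x * x = Rabs x * Rabs x.
Proof. rewrite <- Rabs_mult. rewrite Rabs_right; [reflexivity| apply Rle_ge; apply Rle_0_sqr]. Qed.

Lemma D_sqdist y g t : derivable_pt_lim (fun t => (xi t y - g) * (xi t y - g)) t
  (2 * (xi t y - g) * xd y t).
Proof.
  apply dsq with (f := fun u => xi u y - g).
  eapply dpl_eq with (f := ((fun u => xi u y) - fct_cte g)%F).
  apply derivable_pt_lim_minus. apply Hxi'. apply derivable_pt_lim_const.
  reflexivity. unfold xd. ring.
Qed.

Lemma nz_at y : 0 < s -> Phi y <> 0 -> Phi (xi (t0 s y) y) <> 0.
Proof.
  intros Hs0 Hy Hg. set (T := t0 s y) in *. set (g := xi T y) in *.
  pose proof (T_pos y Hs0 Hy) as HTp. pose proof (T_le y Hs0 Hy) as HTl. fold T in HTp, HTl.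
  pose proof (sig_claim y T Hs0 Hy (Rle_refl _) (nz_before y Hs0 Hy)) as Hsc.
  set (c := 2 * (M + 1) * N).
  assert (Hc0 : 0 <= c) by (unfold c; apply Rmult_le_pos; lra).
  set (u := fun t => (xi t y - g) * (xi t y - g)).
  set (u' := fun t => 2 * (xi t y - g) * xd y t).
  assert (Du : forall t, derivable_pt_lim u t (u' t)) by (intros; apply D_sqdist).
  assert (Hb : forall t, 0 <= t < T -> - c * u t <= u' t).
  { intros t Ht. pose proof (nz_before y Hs0 Hy t Ht) as Hn. pose proof (nz_in _ Hn) as Hi.
    destruct (Hsc t Ht) as [Hs1 Hs2].
    unfold u'. rewrite xd_eq by auto.
    pose proof (AA_bd (xi t y) (sig y t) ltac:(lra) ltac:(lra)) as HA.
    pose proof (lipz g (xi t y) Hg) as Hl. rewrite ext0_in in Hl by lra.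
    replace (- c * u t) with (- (c * u t)) by ring.
    apply abs_lo. unfold u. rewrite sq_abs.
    rewrite Rabs_mult, Rabs_mult, (Rabs_right 2) by lra.
    assert (Rabs (AA (xi t y) (sig y t)) <= (M + 1) * (N * Rabs (xi t y - g))).
    { eapply Rle_trans. apply HA. apply Rmult_le_compat_l; lra. }
    pose proof (Rabs_pos (xi t y - g)). pose proof (Rabs_pos (AA (xi t y) (sig y t))).
    unfold c. nra. }
  assert (Hu0 : 0 < u 0).
  { unfold u. rewrite Hxi0. assert (y <> g) by (intro Heq; apply Hy; rewrite Heq; exact Hg).
    assert (y - g <> 0) by lra. pose proof (Rsqr_pos_lt _ H0). unfold Rsqr in H1. lra. }
  assert (Hlow : forall t, 0 <= t < T -> - u t <= - (u 0 * exp (- c))).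
  { intros t Ht. pose proof (gronwall_down u u' c t Hc0) as Hgd.
    assert (u 0 * exp (- c * t) <= u t).
    { apply Hgd. intros; apply Du. intros t' Ht'. apply Hb. lra. lra. }
    assert (exp (- c) <= exp (- c * t)).
    { apply exp_mono. assert (c * t <= c * 1) by (apply Rmult_le_compat_l; lra). lra. }
    assert (u 0 * exp (- c) <= u 0 * exp (- c * t)) by (apply Rmult_le_compat_l; lra).
    lra. }
  assert (Hcont : continuity_pt (fun t => - u t) T).
  { eapply cont_of. eapply dpl_eq with (f := (- u)%F). apply derivable_pt_lim_opp. apply Du.
    reflexivity. reflexivity. }
  pose proof (left_cont _ T _ Hcont HTp Hlow) as HH. simpl in HH.
  unfold u at 1 in HH. unfold g in HH. rewrite Rminus_diag, Rmult_0_l in HH.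
  pose proof (exp_pos (- c)). nra.
Qed.

Lemma TL y : 0 < s -> Phi y <> 0 ->
  (0 < t0 s y <= s) /\
  (forall t, 0 <= t <= t0 s y -> Phi (xi t y) <> 0 /\ 0 <= sig y t <= s) /\
  sig y (t0 s y) = s.
Proof.
  intros Hs0 Hy.
  assert (HsT : sig y (t0 s y) = s).
  { destruct (Ht0 y) as [_ [H2 _]]. pose proof (nz_at y Hs0 Hy).
    unfold sig, zz. rewrite H2. field. auto. }
  split. split. apply T_pos; auto. apply T_le; auto.
  split; auto.
  intros t [Ht1 Ht2]. destruct (Req_dec t (t0 s y)) as [->|Hne].
  - split. apply nz_at; auto. lra.
  - split. apply nz_before; auto; lra.
    pose proof (sig_claim y (t0 s y) Hs0 Hy (Rle_refl _) (nz_before y Hs0 Hy) t ltac:(lra)). lra.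
Qed.


Definition cc := 16 * (M + 1) * (M + 1).
Definition XX := exp cc.
Definition KK := 8 * (M + 1) * XX.

Lemma XX_ge1 : 1 <= XX.
Proof.
  unfold XX. rewrite <- exp_0. apply exp_mono. unfold cc.
  assert (0 <= (M + 1) * (M + 1)) by nra. lra.
Qed.

Lemma ineq2 al be e1 e2 L : 0 <= L -> Rabs e1 <= L * (Rabs al + Rabs be) ->
  Rabs e2 <= L * (Rabs al + Rabs be) ->
  2 * al * e1 + 2 * be * e2 <= 4 * L * (al * al + be * be).
Proof.
  intros HL H1 H2.
  assert (2 * al * e1 <= 2 * Rabs al * (L * (Rabs al + Rabs be))).
  { apply abs_hi. rewrite !Rabs_mult, (Rabs_right 2) by lra.
    apply Rmult_le_compat_l. pose proof (Rabs_pos al); lra. auto. }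
  assert (2 * be * e2 <= 2 * Rabs be * (L * (Rabs al + Rabs be))).
  { apply abs_hi. rewrite !Rabs_mult, (Rabs_right 2) by lra.
    apply Rmult_le_compat_l. pose proof (Rabs_pos be); lra. auto. }
  rewrite (sq_abs al), (sq_abs be).
  pose proof (Rabs_pos al). pose proof (Rabs_pos be).
  assert (0 <= L * ((Rabs al - Rabs be) * (Rabs al - Rabs be))).
  { apply Rmult_le_pos; auto. apply Rle_0_sqr. }
  nra.
Qed.

Lemma sum_bd al be dy : al * al + be * be <= dy * dy * XX ->
  Rabs al + Rabs be <= 2 * XX * Rabs dy.
Proof.
  intros H. pose proof XX_ge1.
  replace (Rabs al + Rabs be) with (Rabs (Rabs al + Rabs be))
    by (rewrite Rabs_right; auto; pose proof (Rabs_pos al); pose proof (Rabs_pos be); lra).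
  apply sq_le. pose proof (Rabs_pos dy); nra.
  rewrite (sq_abs al), (sq_abs be), (sq_abs dy) in H.
  pose proof (Rabs_pos al). pose proof (Rabs_pos be). pose proof (Rabs_pos dy).
  assert (0 <= (Rabs al - Rabs be) * (Rabs al - Rabs be)) by apply Rle_0_sqr.
  assert (Rabs dy * Rabs dy * XX <= Rabs dy * Rabs dy * (XX * XX)).
  { apply Rmult_le_compat_l. nra. nra. }
  nra.
Qed.

Lemma pair y1 y2 : 0 < s -> Phi y1 <> 0 -> Phi y2 <> 0 -> t0 s y1 <= t0 s y2 ->
  Rabs (GG y1 - GG y2 - (y1 - y2)) <= KK * N * Rabs (y1 - y2).
Proof.
  intros Hs0 Hy1 Hy2 HT.
  destruct (TL y1 Hs0 Hy1) as [[HT1a HT1b] [H1 HsT1]].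
  destruct (TL y2 Hs0 Hy2) as [[HT2a HT2b] [H2 HsT2]].
  set (T1 := t0 s y1) in *. set (T2 := t0 s y2) in *. set (dy := y1 - y2).
  assert (Hin : forall t, 0 <= t <= T1 ->
     a <= xi t y1 <= b /\ a <= xi t y2 <= b /\ 0 <= sig y1 t <= 1 /\ 0 <= sig y2 t <= 1 /\
     Phi (xi t y1) <> 0 /\ Phi (xi t y2) <> 0).
  { intros t Ht. destruct (H1 t Ht) as [Ha Hb]. destruct (H2 t ltac:(lra)) as [Hc Hd].
    pose proof (nz_in _ Ha). pose proof (nz_in _ Hc). repeat split; auto; lra. }
  set (E := fun t => (xi t y1 - xi t y2) * (xi t y1 - xi t y2) + (sig y1 t - sig y2 t) * (sig y1 t - sig y2 t)).
  set (E' := fun t => 2 * (xi t y1 - xi t y2) * (AA (xi t y1) (sig y1 t) - AA (xi t y2) (sig y2 t))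
      + 2 * (sig y1 t - sig y2 t) * (BB (xi t y1) (sig y1 t) - BB (xi t y2) (sig y2 t))).
  assert (DE : forall t, 0 <= t <= T1 -> derivable_pt_lim E t (E' t)).
  { intros t Ht. destruct (Hin t Ht) as [_ [_ [_ [_ [Hn1 Hn2]]]]].
    eapply dpl_eq with (f := plus_fct (fun t => (xi t y1 - xi t y2) * (xi t y1 - xi t y2))
        (fun t => (sig y1 t - sig y2 t) * (sig y1 t - sig y2 t))).
    apply derivable_pt_lim_plus.
    apply dsq with (f := fun t => xi t y1 - xi t y2).
    eapply dpl_eq with (f := ((fun t => xi t y1) - (fun t => xi t y2))%F).
    apply derivable_pt_lim_minus; apply D_xi; auto. reflexivity. reflexivity.
    apply dsq with (f := fun t => sig y1 t - sig y2 t).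
    eapply dpl_eq with (f := (sig y1 - sig y2)%F).
    apply derivable_pt_lim_minus; apply D_sig; auto. reflexivity. reflexivity.
    reflexivity. reflexivity. }
  set (L := 4 * (M + 1) * (M + 1)).
  assert (HL0 : 0 <= L) by (unfold L; nra).
  assert (HAL : forall t, 0 <= t <= T1 -> Rabs (AA (xi t y1) (sig y1 t) - AA (xi t y2) (sig y2 t))
      <= L * (Rabs (xi t y1 - xi t y2) + Rabs (sig y1 t - sig y2 t))).
  { intros t Ht. destruct (Hin t Ht) as [Ha [Hb [Hc [Hd _]]]].
    eapply Rle_trans. apply AA_lip; auto. apply Rmult_le_compat_r.
    pose proof (Rabs_pos (xi t y1 - xi t y2)). pose proof (Rabs_pos (sig y1 t - sig y2 t)). lra.
    unfold L. assert (0 <= (M + 1) * (1 - N)) by nra. nra. }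
  assert (HBL : forall t, 0 <= t <= T1 -> Rabs (BB (xi t y1) (sig y1 t) - BB (xi t y2) (sig y2 t))
      <= L * (Rabs (xi t y1 - xi t y2) + Rabs (sig y1 t - sig y2 t))).
  { intros t Ht. destruct (Hin t Ht) as [Ha [Hb [Hc [Hd _]]]]. apply BB_lip; auto. }
  assert (HEb : forall t, 0 <= t <= T1 -> E t <= dy * dy * XX).
  { intros t Ht. eapply Rle_trans. apply (gronwall_up E E' cc T1); auto.
    unfold cc; nra.
    intros t' Ht'. unfold E', E. replace cc with (4 * L) by (unfold cc, L; ring).
    apply ineq2; auto.
    unfold E. rewrite !Hxi0, !sig0 by auto. fold dy.
    replace ((dy * dy + (0 - 0) * (0 - 0))) with (dy * dy) by ring.
    apply Rmult_le_compat_l. apply Rle_0_sqr. unfold XX. apply exp_mono.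
    assert (cc * t <= cc * 1). apply Rmult_le_compat_l. unfold cc; nra. lra. lra. }
  assert (Hsum : forall t, 0 <= t <= T1 ->
     Rabs (xi t y1 - xi t y2) + Rabs (sig y1 t - sig y2 t) <= 2 * XX * Rabs dy).
  { intros t Ht. apply sum_bd. apply HEb; auto. }
  pose proof XX_ge1 as HX1.
  assert (Hf : Rabs (xi T1 y1 - xi T1 y2 - dy) <= 6 * (M + 1) * N * XX * Rabs dy).
  { assert (Hm := mvt_abs (fun t => xi t y1 - xi t y2 - dy)
      (fun t => AA (xi t y1) (sig y1 t) - AA (xi t y2) (sig y2 t)) 0 T1
      (3 * (M + 1) * N * (2 * XX * Rabs dy))).
    assert (Hm' : Rabs (xi T1 y1 - xi T1 y2 - dy - (xi 0 y1 - xi 0 y2 - dy))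
        <= 3 * (M + 1) * N * (2 * XX * Rabs dy) * Rabs (T1 - 0)).
    { apply Hm; try lra.
      - intros c Hc. destruct (Hin c Hc) as [_ [_ [_ [_ [Hn1 Hn2]]]]].
        eapply dpl_eq with (f := ((fun t => xi t y1) - (fun t => xi t y2) - fct_cte dy)%F).
        apply derivable_pt_lim_minus. apply derivable_pt_lim_minus; apply D_xi; auto.
        apply derivable_pt_lim_const. reflexivity. ring.
      - intros c Hc. destruct (Hin c Hc) as [Ha [Hb [Hc' [Hd _]]]].
        eapply Rle_trans. apply AA_lip; auto. apply Rmult_le_compat_l.
        assert (0 <= (M + 1) * N) by nra. lra. apply Hsum; auto. }
    rewrite !Hxi0 in Hm'.
    replace (xi T1 y1 - xi T1 y2 - dy - (y1 - y2 - dy)) with (xi T1 y1 - xi T1 y2 - dy) in Hm' by (unfold dy; ring).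
    replace (T1 - 0) with T1 in Hm' by ring. rewrite (Rabs_right T1) in Hm' by lra.
    eapply Rle_trans. apply Hm'.
    assert (0 <= 3 * (M + 1) * N * (2 * XX * Rabs dy)).
    { pose proof (Rabs_pos dy). repeat apply Rmult_le_pos; lra. }
    assert (3 * (M + 1) * N * (2 * XX * Rabs dy) * T1 <= 3 * (M + 1) * N * (2 * XX * Rabs dy) * 1).
    { apply Rmult_le_compat_l; lra. }
    lra. }
  assert (Htd : T2 - T1 <= 2 * XX * Rabs dy).
  { destruct (Req_dec T1 T2) as [Heq|Hne].
    { rewrite Heq, Rminus_diag. pose proof (Rabs_pos dy). nra. }
    destruct (MVT_cor2 (sig y2) (fun t => BB (xi t y2) (sig y2 t)) T1 T2) as [c [Hc1 Hc2]]. lra.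
    intros c Hc. apply D_sig. apply H2; lra.
    pose proof (BB_ge1 (xi c y2) (sig y2 c)).
    assert (T2 - T1 <= sig y2 T2 - sig y2 T1) by nra.
    rewrite HsT2, <- HsT1 in H0.
    pose proof (Hsum T1 ltac:(lra)). pose proof (Rle_abs (sig y1 T1 - sig y2 T1)).
    pose proof (Rabs_pos (xi T1 y1 - xi T1 y2)). lra. }
  assert (Hx2 : Rabs (xi T2 y2 - xi T1 y2) <= (M + 1) * N * Rabs (T2 - T1)).
  { apply mvt_abs with (f := fun t => xi t y2) (f' := fun t => AA (xi t y2) (sig y2 t)) (lo := T1) (hi := T2); try lra.
    intros c Hc. apply D_xi. apply H2; lra.
    intros c Hc. destruct (H2 c ltac:(lra)) as [Hn Hsg]. pose proof (nz_in _ Hn).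
    apply AA_bd2; lra. }
  unfold GG. fold T1 T2. fold dy.
  replace (xi T1 y1 - xi T2 y2 - dy) with ((xi T1 y1 - xi T1 y2 - dy) - (xi T2 y2 - xi T1 y2)) by ring.
  eapply Rle_trans. apply Rabs_triang. rewrite Rabs_Ropp.
  rewrite (Rabs_right (T2 - T1)) in Hx2 by lra.
  assert ((M + 1) * N * (T2 - T1) <= (M + 1) * N * (2 * XX * Rabs dy)).
  { apply Rmult_le_compat_l; auto. nra. }
  unfold KK. nra.
Qed.


Lemma KK_pos : 0 < KK.
Proof. unfold KK. pose proof XX_ge1. nra. Qed.

Lemma hybrid y1 y2 : 0 < s -> Phi y1 = 0 -> Phi y2 <> 0 ->
  Rabs (GG y2 - y2) <= KK * N * Rabs (y1 - y2).
Proof.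
  intros Hs0 Hy1 Hy2.
  destruct (TL y2 Hs0 Hy2) as [[HT2a HT2b] [H2 HsT2]].
  set (T2 := t0 s y2) in *. set (dy := y1 - y2).
  pose proof XX_ge1 as HX1.
  set (u := fun t => (xi t y2 - y1) * (xi t y2 - y1)).
  set (u' := fun t => 2 * (xi t y2 - y1) * xd y2 t).
  assert (HA : forall t, 0 <= t <= T2 -> Rabs (AA (xi t y2) (sig y2 t)) <= (M + 1) * N * Rabs (xi t y2 - y1)).
  { intros t Ht. destruct (H2 t Ht) as [Hn Hsg]. pose proof (nz_in _ Hn).
    eapply Rle_trans. apply AA_bd; lra.
    pose proof (lipz y1 (xi t y2) Hy1) as Hl. rewrite ext0_in in Hl by lra.
    rewrite Rmult_assoc. apply Rmult_le_compat_l; lra. }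
  assert (Hu : forall t, 0 <= t <= T2 -> u t <= u 0 * exp (cc * t)).
  { apply gronwall_up with (E' := u'). unfold cc; nra.
    intros; apply D_sqdist.
    intros t Ht. unfold u'. destruct (H2 t Ht) as [Hn _]. rewrite xd_eq by auto.
    apply abs_hi. rewrite !Rabs_mult, (Rabs_right 2) by lra.
    pose proof (HA t Ht). pose proof (Rabs_pos (xi t y2 - y1)).
    unfold u. rewrite sq_abs.
    assert (2 * (M + 1) * N <= cc) by (unfold cc; nra).
    assert (0 <= Rabs (xi t y2 - y1) * Rabs (xi t y2 - y1)) by nra.
    assert (Rabs (xi t y2 - y1) * Rabs (AA (xi t y2) (sig y2 t)) <=
            Rabs (xi t y2 - y1) * ((M + 1) * N * Rabs (xi t y2 - y1))) by (apply Rmult_le_compat_l; lra).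
    nra. }
  assert (Hd : forall t, 0 <= t <= T2 -> Rabs (xi t y2 - y1) <= XX * Rabs dy).
  { intros t Ht. apply sq_le. pose proof (Rabs_pos dy); nra.
    assert (u t <= dy * dy * XX).
    { eapply Rle_trans. apply Hu; auto. unfold u. rewrite Hxi0.
      replace ((y2 - y1) * (y2 - y1)) with (dy * dy) by (unfold dy; ring).
      apply Rmult_le_compat_l. apply Rle_0_sqr. unfold XX. apply exp_mono.
      assert (cc * t <= cc * 1). apply Rmult_le_compat_l. unfold cc; nra. lra. lra. }
    unfold u in H. rewrite (sq_abs dy) in H.
    assert (Rabs dy * Rabs dy * XX <= Rabs dy * Rabs dy * (XX * XX)).
    { apply Rmult_le_compat_l. pose proof (Rabs_pos dy); nra. nra. }
    replace (XX * Rabs dy * (XX * Rabs dy)) with (Rabs dy * Rabs dy * (XX * XX)) by ring. lra. }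
  assert (Hm : Rabs (xi T2 y2 - xi 0 y2) <= ((M + 1) * N * (XX * Rabs dy)) * Rabs (T2 - 0)).
  { apply mvt_abs with (f := fun t => xi t y2) (f' := fun t => AA (xi t y2) (sig y2 t)) (lo := 0) (hi := T2); try lra.
    intros c Hc. apply D_xi. apply H2; lra.
    intros c Hc. eapply Rle_trans. apply HA; auto. apply Rmult_le_compat_l. nra. apply Hd; auto. }
  rewrite Hxi0, Rminus_0_r, (Rabs_right T2) in Hm by lra.
  unfold GG. fold T2.
  eapply Rle_trans. apply Hm.
  assert (0 <= (M + 1) * N * (XX * Rabs dy)).
  { pose proof (Rabs_pos dy). repeat apply Rmult_le_pos; lra. }
  assert ((M + 1) * N * (XX * Rabs dy) * T2 <= (M + 1) * N * (XX * Rabs dy)) by nra.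
  unfold KK. fold dy. pose proof (Rabs_pos dy).
  assert (0 <= (M + 1) * N * XX * Rabs dy) by (repeat apply Rmult_le_pos; lra).
  nra.
Qed.

Lemma key y1 y2 : Rabs (GG y1 - GG y2 - (y1 - y2)) <= KK * N * Rabs (y1 - y2).
Proof.
  pose proof KK_pos.
  assert (Hnn : 0 <= KK * N * Rabs (y1 - y2)) by (pose proof (Rabs_pos (y1 - y2)); apply Rmult_le_pos; [apply Rmult_le_pos|]; lra).
  destruct (Req_dec s 0) as [Hs0|Hs0].
  { rewrite !G_triv' by auto. replace (y1 - y2 - (y1 - y2)) with 0 by ring. rewrite Rabs_R0; auto. }
  assert (Hsp : 0 < s) by lra.
  destruct (Req_dec (Phi y1) 0) as [H1|H1]; destruct (Req_dec (Phi y2) 0) as [H2|H2].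
  - rewrite !G_triv' by auto. replace (y1 - y2 - (y1 - y2)) with 0 by ring. rewrite Rabs_R0; auto.
  - rewrite (G_triv' y1) by auto. replace (y1 - GG y2 - (y1 - y2)) with (- (GG y2 - y2)) by ring.
    rewrite Rabs_Ropp. apply hybrid; auto.
  - rewrite (G_triv' y2) by auto. replace (GG y1 - y2 - (y1 - y2)) with (GG y1 - y1) by ring.
    rewrite (Rabs_minus_sym y1 y2). apply hybrid; auto.
  - destruct (Rle_dec (t0 s y1) (t0 s y2)).
    + apply pair; auto.
    + replace (GG y1 - GG y2 - (y1 - y2)) with (- (GG y2 - GG y1 - (y2 - y1))) by ring.
      rewrite Rabs_Ropp, (Rabs_minus_sym y1 y2). apply pair; auto. lra.
Qed.

Lemma G_near x : 0 < s -> a <= x <= b -> a <= GG x <= b /\ Rabs (GG x - x) <= (M + 1) * N.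
Proof.
  intros Hs0 Hx. destruct (Req_dec (Phi x) 0) as [H|H].
  { rewrite G_triv' by auto. rewrite Rminus_diag, Rabs_R0. split; auto. nra. }
  destruct (TL x Hs0 H) as [[HTa HTb] [H2 HsT]].
  set (T := t0 s x) in *.
  split.
  { destruct (H2 T ltac:(lra)) as [Hn _]. pose proof (nz_in _ Hn). unfold GG. fold T. lra. }
  assert (Hm : Rabs (xi T x - xi 0 x) <= ((M + 1) * N) * Rabs (T - 0)).
  { apply mvt_abs with (f := fun t => xi t x) (f' := fun t => AA (xi t x) (sig x t)) (lo := 0) (hi := T); try lra.
    intros c Hc. apply D_xi. apply H2; lra.
    intros c Hc. destruct (H2 c Hc) as [Hn Hsg]. pose proof (nz_in _ Hn). apply AA_bd2; lra. }
  rewrite Hxi0, Rminus_0_r, (Rabs_right T) in Hm by lra.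
  unfold GG. fold T. eapply Rle_trans. apply Hm.
  assert (0 <= (M + 1) * N) by nra. nra.
Qed.

Lemma final1 x d : derivable_pt_lim (fun y => xi (t0 s y) y) x d -> Rabs (d - 1) <= KK * N.
Proof.
  intros Hd. apply lim_bound with (1 := Hd). intros eps Heps. exists 1. split. lra.
  intros h Hh _. pose proof (key (x + h) x) as Hk. fold (GG (x + h)). fold (GG x).
  replace (x + h - x) with h in Hk by ring.
  replace ((GG (x + h) - GG x) / h - 1) with ((GG (x + h) - GG x - h) / h) by (field; auto).
  unfold Rdiv. rewrite Rabs_mult, Rabs_inv by auto.
  assert (0 < Rabs h) by (apply Rabs_pos_lt; auto).
  apply Rle_trans with (KK * N). 2: lra.
  apply Rmult_le_reg_r with (Rabs h); auto.
  rewrite Rmult_assoc, Rinv_l by lra. lra.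
Qed.


Lemma div_bd u h B : h <> 0 -> Rabs u <= B * Rabs h -> Rabs (u / h) <= B.
Proof.
  intros Hh H. unfold Rdiv. rewrite Rabs_mult, Rabs_inv.
  assert (0 < Rabs h) by (apply Rabs_pos_lt; auto).
  apply Rmult_le_reg_r with (Rabs h); auto.
  rewrite Rmult_assoc, Rinv_l by lra. lra.
Qed.

Lemma between_abs u v th : Rmin u v <= th <= Rmax u v -> Rabs (th - v) <= Rabs (u - v).
Proof.
  unfold Rmin, Rmax. destruct (Rle_dec u v); intros [H1 H2].
  - rewrite !Rabs_left1 by lra. lra.
  - rewrite !Rabs_right by lra. lra.
Qed.

Definition CC := (M + 2) * KK + M * (M + 1) + 1.

Lemma final2 x d : derivable_pt_lim (fun y => eta (t0 s y) y) x d -> Rabs (d - w1 x) <= CC * N.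
Proof.
  intros Hd. pose proof KK_pos as HK.
  assert (HCC : 0 <= CC * N).
  { unfold CC. apply Rmult_le_pos; auto. assert (0 <= M * (M + 1)) by nra. nra. }
  assert (HH : forall y, eta (t0 s y) y = w (GG y) + s * Phi (GG y)).
  { intros y. destruct (Ht0 y) as [_ [H _]]. exact H. }
  destruct (classic (s = 0 \/ ~ (a <= x <= b))) as [Hc|Hc].
  - assert (Hloc : exists del, 0 < del /\ forall y, Rabs (y - x) < del -> eta (t0 s y) y = w y).
    { destruct Hc as [Hs0|Hx].
      - exists 1. split. lra. intros y _. rewrite HH, G_triv' by auto. rewrite Hs0; ring.
      - destruct (Rlt_dec x a) as [Hxa|Hxa].
        + exists (a - x). split. lra. intros y Hy. apply Rabs_def2 in Hy.
          assert (Hp : Phi y = 0) by (apply ext0_out; lra).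
          rewrite HH, G_triv' by auto. rewrite Hp; ring.
        + assert (b < x) by lra. exists (x - b). split. lra. intros y Hy. apply Rabs_def2 in Hy.
          assert (Hp : Phi y = 0) by (apply ext0_out; lra).
          rewrite HH, G_triv' by auto. rewrite Hp; ring. }
    destruct Hloc as [del [Hdel Hloc]].
    assert (Rabs (d - w1 x) <= 0).
    { apply lim_bound with (1 := Hd). intros eps Heps.
      destruct (Hw1 x eps Heps) as [d' Hd'].
      assert (Hm : 0 < Rmin del d') by (apply Rmin_pos; [lra|apply cond_pos]).
      exists (Rmin del d'). split; auto. intros h Hh Hhd.
      assert (Rmin del d' <= del) by apply Rmin_l. assert (Rmin del d' <= d') by apply Rmin_r.
      rewrite !Hloc.
      + left. rewrite Rplus_0_l. apply Hd'; auto. lra.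
      + rewrite Rminus_diag, Rabs_R0; lra.
      + replace (x + h - x) with h by ring. lra. }
    lra.
  - assert (Hs0 : 0 < s).
    { destruct (Req_dec s 0); [exfalso; apply Hc; left; auto | lra]. }
    assert (Hx : a <= x <= b) by (apply NNPP; intro; apply Hc; right; auto).
    destruct (G_near x Hs0 Hx) as [HGx HGxx].
    set (Gx := GG x) in *.
    assert (Hw1G : Rabs (w1 Gx) <= M) by (apply Bw1; auto).
    assert (Hw1d : Rabs (w1 Gx - w1 x) <= M * ((M + 1) * N)).
    { eapply Rle_trans. apply (mvt_abs w1 w2 a b M); auto. apply Rmult_le_compat_l; auto. }
    apply lim_bound with (1 := Hd). intros eps Heps.
    set (e1 := eps / (KK + 2)).
    assert (He1 : 0 < e1) by (unfold e1; apply Rdiv_lt_0_compat; lra).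
    assert (Hc1 : continuity_pt w1 Gx) by (eapply cont_of; apply Hw2).
    destruct (Hc1 e1 He1) as [d1 [Hd1 Hd1']].
    exists (d1 / (1 + KK)). split. apply Rdiv_lt_0_compat; lra.
    intros h Hh Hhd.
    set (G' := GG (x + h)).
    pose proof (key (x + h) x) as Hk. fold G' Gx in Hk. replace (x + h - x) with h in Hk by ring.
    assert (Hha : 0 < Rabs h) by (apply Rabs_pos_lt; auto).
    assert (HGd : Rabs (G' - Gx) <= (1 + KK) * Rabs h).
    { replace (G' - Gx) with ((G' - Gx - h) + h) by ring. eapply Rle_trans. apply Rabs_triang.
      assert (KK * N * Rabs h <= KK * Rabs h).
      { apply Rmult_le_compat_r. lra. nra. }
      lra. }
    assert (HGd1 : Rabs (G' - Gx) < d1).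
    { eapply Rle_lt_trans. apply HGd.
      apply Rmult_lt_reg_l with (/ (1 + KK)). apply Rinv_0_lt_compat; lra.
      rewrite <- Rmult_assoc, Rinv_l, Rmult_1_l by lra.
      unfold Rdiv in Hhd. rewrite Rmult_comm. exact Hhd. }
    destruct (mvt_ex w w1 G' Gx Hw1) as [th [Hth Hteq]].
    pose proof (between_abs _ _ _ Hth) as Hthb.
    assert (Hw1th : Rabs (w1 th - w1 Gx) <= e1).
    { destruct (Req_dec th Gx) as [->|Hne]. rewrite Rminus_diag, Rabs_R0; lra.
      left. apply Hd1'. split. unfold D_x, no_cond; split; auto.
      simpl. unfold R_dist. lra. }
    set (q := (G' - Gx) / h).
    assert (Hq1 : Rabs (q - 1) <= KK * N).
    { replace (q - 1) with ((G' - Gx - h) / h) by (unfold q; field; auto).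
      apply div_bd; auto. }
    assert (Hq : Rabs q <= 1 + KK).
    { unfold q. apply div_bd; auto. }
    set (r := (Phi G' - Phi Gx) / h).
    assert (Hr : Rabs r <= N * Rabs q).
    { unfold r. apply div_bd; auto. eapply Rle_trans. apply Phi_lip.
      unfold q. unfold Rdiv. rewrite Rabs_mult, Rabs_inv.
      rewrite Rmult_assoc. apply Rmult_le_compat_l; auto.
      rewrite Rmult_assoc, Rinv_l by lra. lra. }
    rewrite !HH. fold G' Gx.
    replace ((w G' + s * Phi G' - (w Gx + s * Phi Gx)) / h - w1 x)
      with (w1 th * (q - 1) + (w1 th - w1 Gx) + (w1 Gx - w1 x) + s * r).
    2: { unfold q, r. replace (w G') with (w Gx + w1 th * (G' - Gx)) by lra. field; auto. }
    assert (H1 : Rabs (w1 th) <= M + e1).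
    { replace (w1 th) with ((w1 th - w1 Gx) + w1 Gx) by ring.
      eapply Rle_trans. apply Rabs_triang. lra. }
    assert (H2 : Rabs (w1 th * (q - 1)) <= (M + e1) * (KK * N)) by (apply amul; auto).
    assert (H3 : Rabs (s * r) <= N * (1 + KK)).
    { rewrite Rabs_mult, (Rabs_right s) by lra.
      assert (s * Rabs r <= 1 * Rabs r) by (apply Rmult_le_compat_r; [apply Rabs_pos|lra]).
      assert (N * Rabs q <= N * (1 + KK)) by (apply Rmult_le_compat_l; auto).
      lra. }
    eapply Rle_trans. apply Rabs_triang.
    eapply Rle_trans. apply Rplus_le_compat_r. apply Rabs_triang.
    eapply Rle_trans. apply Rplus_le_compat_r. apply Rplus_le_compat_r. apply Rabs_triang.
    assert (Heps1 : e1 * (KK + 2) = eps) by (unfold e1; field; lra).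
    assert (e1 * (KK * N) <= e1 * KK) by (apply Rmult_le_compat_l; nra).
    unfold CC. nra.
Qed.

End Flow.

Lemma sup_bd f a b S : a <= b -> sup_abs_on f a b S ->
  0 <= S /\ forall u, a <= u <= b -> Rabs (f u) <= S.
Proof.
  intros Hab [Hub _]. split.
  - eapply Rle_trans. apply Rabs_pos. apply Hub. exists a. split; auto; lra.
  - intros u Hu. apply Hub. exists u. auto.
Qed.

Theorem theorem3p8 :
  forall M : R, exists C0 : R, 0 < C0 /\
  forall (w w1 w2 w3 : R -> R) (a b : R) (p : list R)
         (xi eta t0 : R -> R -> R) (Nw Nphi : R),
    (forall x, derivable_pt_lim w x (w1 x)) ->
    (forall x, derivable_pt_lim w1 x (w2 x)) ->
    (forall x, derivable_pt_lim w2 x (w3 x)) ->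
    continuity w3 ->
    (exists T, 0 < T /\ forall x, w (x + T) = w x) ->
    (forall x, -1 <= x <= 1 -> 0 < w x) ->
    -1 < a -> a < b -> b < 1 ->
    (forall k : nat, (k <= 3)%nat ->
       peval (pderivn k p) a = 0 /\ peval (pderivn k p) b = 0) ->
    (forall x, xi 0 x = x) ->
    (forall x, eta 0 x = w x) ->
    (forall x t, derivable_pt_lim (fun t' => xi t' x) t
        (- w1 (xi t x) * ext0 a b p (xi t x)
         - (eta t x - w (xi t x)) * ext0 a b (pderiv p) (xi t x))) ->
    (forall x t, derivable_pt_lim (fun t' => eta t' x) t
        (ext0 a b p (xi t x))) ->
    (forall s x, 0 <= s <= 1 ->
       0 <= t0 s x /\
       eta (t0 s x) x = w (xi (t0 s x) x) + s * ext0 a b p (xi (t0 s x) x) /\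
       (forall t, 0 <= t < t0 s x ->
          eta t x <> w (xi t x) + s * ext0 a b p (xi t x))) ->
    C2norm_on w w1 w2 a b Nw -> Nw = M ->
    C2norm_on (peval p) (peval (pderiv p)) (peval (pderivn 2 p)) a b Nphi ->
    Nphi < 1 ->
    forall s x, 0 <= s <= 1 ->
      (forall d, derivable_pt_lim (fun y => xi (t0 s y) y) x d ->
         Rabs (d - 1) <= C0 * Nphi) /\
      (forall d, derivable_pt_lim (fun y => eta (t0 s y) y) x d ->
         Rabs (d - w1 x) <= C0 * Nphi).
Proof.
  intros M. exists (CC (Rabs M)). split.
  { pose proof (KK_pos (Rabs M) (Rabs_pos M)). unfold CC.
    pose proof (Rabs_pos M). assert (0 <= Rabs M * (Rabs M + 1)) by nra.
    assert (0 <= (Rabs M + 2) * KK (Rabs M)) by (apply Rmult_le_pos; lra). lra. }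
  intros w w1 w2 w3 a b p xi eta t0 Nw Nphi Hw1 Hw2 _ _ _ _ _ Hab _ Hk Hxi0 Heta0 Hxi' Heta' Ht0
    HNw HNwM HNphi HNphi1 s x Hs.
  destruct HNw as [S0 [S1 [S2 [HS0 [HS1 [HS2 HS]]]]]].
  destruct (sup_bd _ a b _ (Rlt_le _ _ Hab) HS0) as [HS0p _].
  destruct (sup_bd _ a b _ (Rlt_le _ _ Hab) HS1) as [HS1p B1].
  destruct (sup_bd _ a b _ (Rlt_le _ _ Hab) HS2) as [HS2p B2].
  destruct HNphi as [R0 [R1 [R2 [HR0 [HR1 [HR2 HR]]]]]].
  destruct (sup_bd _ a b _ (Rlt_le _ _ Hab) HR0) as [HR0p C0'].
  destruct (sup_bd _ a b _ (Rlt_le _ _ Hab) HR1) as [HR1p C1'].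
  destruct (sup_bd _ a b _ (Rlt_le _ _ Hab) HR2) as [HR2p C2'].
  assert (HM : Rabs M = M) by (apply Rabs_right; lra).
  rewrite HM.
  assert (Hpa : peval p a = 0) by (apply (Hk 0%nat); lia).
  assert (Hpb : peval p b = 0) by (apply (Hk 0%nat); lia).
  assert (HB1 : forall u, a <= u <= b -> Rabs (w1 u) <= M) by (intros u Hu; pose proof (B1 u Hu); lra).
  assert (HB2 : forall u, a <= u <= b -> Rabs (w2 u) <= M) by (intros u Hu; pose proof (B2 u Hu); lra).
  assert (HP0 : forall u, a <= u <= b -> Rabs (peval p u) <= Nphi) by (intros u Hu; pose proof (C0' u Hu); lra).
  assert (HP1 : forall u, a <= u <= b -> Rabs (peval (pderiv p) u) <= Nphi) by (intros u Hu; pose proof (C1' u Hu); lra).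
  assert (HP2 : forall u, a <= u <= b -> Rabs (peval (pderiv (pderiv p)) u) <= Nphi) by (intros u Hu; pose proof (C2' u Hu) as Hc; change (pderivn 2 p) with (pderiv (pderiv p)) in Hc; lra).
  assert (HN : 0 <= Nphi) by lra.
  assert (HM0 : 0 <= M) by lra.
  split.
  - intros d Hd.
    pose proof (final1 w w1 w2 a b p xi eta t0 M Nphi s Hw1 Hw2 Hab Hpa Hpb Hxi0 Heta0 Hxi' Heta' Hs
      (fun y => Ht0 s y Hs) HM0 HN HNphi1 HB1 HB2 HP0 HP1 HP2 x d Hd).
    eapply Rle_trans. apply H. apply Rmult_le_compat_r; auto.
    pose proof (KK_pos M HM0). unfold CC. assert (0 <= M * (M + 1)) by nra.
    assert (0 <= (M + 1) * KK M) by (apply Rmult_le_pos; lra). lra.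
  - intros d Hd.
    exact (final2 w w1 w2 a b p xi eta t0 M Nphi s Hw1 Hw2 Hab Hpa Hpb Hxi0 Heta0 Hxi' Heta' Hs
      (fun y => Ht0 s y Hs) HM0 HN HNphi1 HB1 HB2 HP0 HP1 HP2 x d Hd).
Qed.
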